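(* For any strings $S_1,S_2,S_3\in\Sigma^*$: (i) $\mathrm{RSD}(S_1,S_2)=\mathrm{RSD}(S_2,S_1)$; (ii) $0\le \mathrm{RSD}(S_1,S_2)\le 1$; (iii) $\mathrm{RSD}(S_1,S_2)=0$ if and only if $S_1=S_2$; (iv) $\mathrm{RSD}(S_1,S_3)\le \mathrm{RSD}(S_1,S_2)+\mathrm{RSD}(S_2,S_3)$. In particular $\mathrm{RSD}$ is a metric on any set of strings.
   Context: $\mathrm{ED}(c,c')$ is the minimum number of insertions and deletions transforming $c$ into $c'$. For a string $S$ of length $n$ and integers $i\le j$, $S[i,j]$ is the substring from position $i$ through $j$, $S(i,j]=S[i+1,j]$; if $i<1$ then $S[i,j]$ denotes $\bot^{-i+1}\cdot S[1,j]$ where $\bot$ is a special symbol not in $\Sigma$ (padding on the left). The relative suffix distance is $\mathrm{RSD}(S,S')=\max_{k>0}\frac{\mathrm{ED}\big(S(|S|-k,|S|],\,S'(|S'|-k,|S'|]\big)}{2k}$. *)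

(* Defs.v *)
From mathcomp Require Import all_boot all_order all_algebra.
From mathcomp Require Import boolp classical_sets reals.
Set Implicit Arguments.
Unset Strict Implicit.
Unset Printing Implicit Defensive.
Import Order.TTheory GRing.Theory Num.Theory.

Section EditDistance.
Variable A : Type.

Definition ed_step (c d : seq A) : Prop :=
  (exists u v a, c = u ++ v /\ d = u ++ a :: v) \/
  (exists u v a, c = u ++ a :: v /\ d = u ++ v).

Fixpoint ed_reach (n : nat) (c d : seq A) : Prop :=
  match n with
  | 0 => c = d
  | n'.+1 => exists e, ed_step c e /\ ed_reach n' e d
  end.

Lemma ed_reach_trans m n a b c :
  ed_reach m a b -> ed_reach n b c -> ed_reach (m + n) a c.
Proof.
elim: m a => [|m IH] a /= Hab Hbc; first by rewrite Hab.
case: Hab => e [He Heb]; exists e; split => //; exact: IH.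
Qed.

Lemma ed_reach_del (c : seq A) : ed_reach (size c) c [::].
Proof.
elim: c => [|x s IH] //=; exists s; split => //.
right; by exists [::], s, x.
Qed.

Lemma ed_reach_ins (c : seq A) : ed_reach (size c) [::] c.
Proof.
elim: c => [|x s IH] //=.
have H1 : ed_reach 1 s (x :: s).
  by exists (x :: s); split => //; left; exists [::], s, x.
by have := ed_reach_trans IH H1; rewrite addn1.
Qed.

Lemma ed_exists (c c' : seq A) : exists n, `[< ed_reach n c c' >].
Proof.
exists (size c + size c'); apply/asboolP.
exact: ed_reach_trans (ed_reach_del c) (ed_reach_ins c').
Qed.

Definition ED (c c' : seq A) : nat := ex_minn (ed_exists c c').

End EditDistance.

(* Strings over T; the padding symbol "bot" (not in T) is None. *)
(* suff S k = S(|S|-k, |S|], padded on the left with bot^(k-|S|) when k > |S|. *)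
Definition suff (T : Type) (S : seq T) (k : nat) : seq (option T) :=
  nseq (k - size S) None ++ map Some (drop (size S - k) S).

(* RSD(S,S') = max_{k>0} ED(S(|S|-k,|S|], S'(|S'|-k,|S'|]) / (2k),
   rendered as the supremum (over reals) of these ratios. *)
Definition RSD (R : realType) (T : Type) (S S' : seq T) : R :=
  sup [set ((ED (suff S k) (suff S' k))%:R / (2 * k)%:R : R)%R
      | k in [set k : nat | (0 < k)%N]].

(* Main.v *)
Require Import Defs.
From mathcomp Require Import all_boot all_order all_algebra.
From mathcomp Require Import boolp classical_sets reals.
From mathcomp Require Import zify.
From Stdlib Require Import Lia.
Import Order.TTheory GRing.Theory Num.Theory.
Local Open Scope classical_set_scope.
Local Open Scope ring_scope.

Section Aux.
Context {A : Type}.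

Lemma ED_spec (c d : seq A) : ed_reach (ED c d) c d.
Proof. rewrite /ED; case: ex_minnP => n /asboolP H _; exact: H. Qed.

Lemma ED_le n (c d : seq A) : ed_reach n c d -> (ED c d <= n)%N.
Proof. move=> H; rewrite /ED; case: ex_minnP => m _ Hm; apply: Hm; exact/asboolP. Qed.

Lemma ed_step_sym (c d : seq A) : ed_step c d -> ed_step d c.
Proof. by case=> [[u [v [a [-> ->]]]]|[u [v [a [-> ->]]]]]; [right|left]; exists u, v, a. Qed.

Lemma ed_reach_sym n (c d : seq A) : ed_reach n c d -> ed_reach n d c.
Proof.
elim: n c => [|n IH] c /=; first by move=> ->.
case=> e [He Hed].
have H1 : ed_reach 1 e c by exists c; split => //; exact: ed_step_sym.
by have := ed_reach_trans (IH _ Hed) H1; rewrite addn1.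
Qed.

Lemma ED_sym (c d : seq A) : ED c d = ED d c.
Proof.
apply/eqP; rewrite eqn_leq; apply/andP; split; apply: ED_le;
  apply: ed_reach_sym; exact: ED_spec.
Qed.

Lemma ED_tri (a b c : seq A) : (ED a c <= ED a b + ED b c)%N.
Proof. apply: ED_le; apply: ed_reach_trans; exact: ED_spec. Qed.

Lemma ED_refl (c : seq A) : ED c c = 0%N.
Proof. apply/eqP; rewrite -leqn0; exact: (@ED_le 0). Qed.

Lemma ED_bound (c d : seq A) : (ED c d <= size c + size d)%N.
Proof. apply: ED_le; exact: ed_reach_trans (ed_reach_del c) (ed_reach_ins d). Qed.

Lemma ED0 (c d : seq A) : ED c d = 0%N -> c = d.
Proof. by move=> H; have := ED_spec c d; rewrite H. Qed.
End Aux.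

Lemma size_suff (T : Type) (S : seq T) k : size (suff S k) = k.
Proof. rewrite /suff size_cat size_nseq size_map size_drop; lia. Qed.

Lemma suffE {T : Type} (S : seq T) k : (size S <= k)%N ->
  suff S k = nseq (k - size S) None ++ map Some S.
Proof. by move=> h; rewrite /suff (eqP h) drop0. Qed.

Lemma cnt0 {T : eqType} (S : seq T) : count (preim Some (pred1 None)) S = 0%N.
Proof. by elim: S. Qed.

Section Main.
Variable R : realType.

Definition rt {T : Type} (S S' : seq T) (k : nat) : R :=
  (ED (suff S k) (suff S' k))%:R / (2 * k)%:R.

Lemma rt_ge0 {T : Type} (S S' : seq T) k : 0 <= rt S S' k.
Proof. by rewrite /rt divr_ge0. Qed.

Lemma rt_le1 {T : Type} (S S' : seq T) k : (0 < k)%N -> rt S S' k <= 1.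
Proof.
move=> k0; rewrite /rt ler_pdivrMr ?ltr0n ?muln_gt0 // mul1r ler_nat.
by have := ED_bound (suff S k) (suff S' k); rewrite !size_suff mul2n -addnn.
Qed.

Lemma RSDE {T : Type} (S S' : seq T) :
  RSD R S S' = sup [set rt S S' k | k in [set k : nat | (0 < k)%N]].
Proof. by []. Qed.

Lemma E_ne {T : Type} (S S' : seq T) :
  [set rt S S' k | k in [set k : nat | (0 < k)%N]] !=set0.
Proof. by exists (rt S S' 1), 1%N. Qed.

Lemma E_ub {T : Type} (S S' : seq T) :
  ubound [set rt S S' k | k in [set k : nat | (0 < k)%N]] 1.
Proof. by move=> _ [k k0 <-]; exact: rt_le1. Qed.

Lemma E_hub {T : Type} (S S' : seq T) :
  has_ubound [set rt S S' k | k in [set k : nat | (0 < k)%N]].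
Proof. by exists 1; exact: E_ub. Qed.

Lemma rt_le_RSD {T : Type} (S S' : seq T) k : (0 < k)%N -> rt S S' k <= RSD R S S'.
Proof. move=> k0; rewrite RSDE; apply: ub_le_sup; first exact: E_hub. by exists k. Qed.

Lemma RSD_ge0 {T : Type} (S S' : seq T) : 0 <= RSD R S S'.
Proof. apply: le_trans (rt_ge0 S S' 1) _; exact: rt_le_RSD. Qed.

Lemma RSD_le1 {T : Type} (S S' : seq T) : RSD R S S' <= 1.
Proof. rewrite RSDE; apply: ge_sup; [exact: E_ne | exact: E_ub]. Qed.
End Main.

Theorem lemma14 (R : realType) (T : eqType) (S1 S2 S3 : seq T) :
  [/\ RSD R S1 S2 = RSD R S2 S1,
      0 <= RSD R S1 S2 <= 1,
      RSD R S1 S2 = 0 <-> S1 = S2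
    & RSD R S1 S3 <= RSD R S1 S2 + RSD R S2 S3].
Proof.
split.
- rewrite !RSDE; congr sup; apply/seteqP; split => _ [k k0 <-]; exists k => //;
    by rewrite /rt ED_sym.
- by rewrite RSD_ge0 RSD_le1.
- split; last first.
    move=> ->; apply/eqP; rewrite eq_le RSD_ge0 andbT RSDE.
    apply: ge_sup; first exact: E_ne.
    by move=> _ [k k0 <-]; rewrite /rt ED_refl mul0r.
  move=> H0.
  pose k := (size S1 + size S2).+1.
  have : rt R S1 S2 k <= 0 by rewrite -H0; apply: rt_le_RSD.
  rewrite /rt pmulr_lle0 ?invr_gt0 ?ltr0n ?muln_gt0 // lern0 => /eqP /ED0.
  rewrite (@suffE _ S1 k) 1?(@suffE _ S2 k); try (rewrite /k; lia).
  move=> Heq.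
  have Hs : (k - size S1 = k - size S2)%N.
    have := congr1 (count (pred1 None)) Heq.
    by rewrite !count_cat !count_nseq /= !mul1n !count_map !cnt0 !addn0.
  move: Heq; rewrite Hs => /eqP; rewrite eqseq_cat ?size_nseq // => /andP [_ /eqP].
  by move/(inj_map (@Some_inj _)).
- rewrite RSDE; apply: ge_sup; first exact: E_ne.
  move=> _ [k k0 <-].
  apply: (le_trans _ (lerD (@rt_le_RSD R _ S1 S2 k k0) (@rt_le_RSD R _ S2 S3 k k0))).
  by rewrite /rt -mulrDl ler_wpM2r ?invr_ge0 // -natrD ler_nat ED_tri.
Qed.
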